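(* The following hold. (1) Every $(1,1)$ subgraph of $Q_1$ is the single edge of $Q_1$. (2) Every $(2,2)$ subgraph of $Q_2$ contains the image under some automorphism of $Q_2$ of the edge set $\{*0,\ 0*\}$. (3) Every $(2,3)$ subgraph of $Q_3$ contains the image under some automorphism of $Q_3$ of the edge set $\{10*,\ *00,\ 0*0,\ 01*\}$ (a path with four edges). (4) Every $(2,4)$ subgraph of $Q_4$ contains the image under some automorphism of $Q_4$ of the edge set $\{*000,\ 0*00,\ 01*0,\ 011*,\ 0*11,\ *011,\ 101*,\ 10*0\}$ (a cycle of length $8$).
   Context: $Q_n$ denotes the $n$-dimensional hypercube graph on vertex set $\{0,1\}^n$, two vertices adjacent iff they differ in exactly one coordinate. A string in $\{0,1,*\}^n$ with exactly one $*$ denotes the edge of $Q_n$ joining the two vertices obtained by replacing $*$ by $0$ and by $1$. Automorphisms of $Q_n$ are the maps obtained by permuting coordinates and complementing some coordinates. Divider–Chooser game on $\{0,1\}^n$ with respect to a subgraph $G$ of $Q_n$: it lasts $n-1$ rounds; starting with the vertex set $\{0,1\}^n$, in each round the Divider picks a coordinate $i\in[n]$ not picked before and the Chooser either deletes all current vertices $x$ with $x_i=0$ or all current vertices with $x_i=1$. After $n-1$ rounds two vertices remain (they form an edge of $Q_n$); the Chooser wins if this edge belongs to $G$. A $(k,n)$ subgraph is a subgraph $G$ of $Q_n$ of maximum degree at most $k$ such that the Chooser has a winning strategy in this game. *)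

(* Defs.v *)
From mathcomp Require Import all_boot fingroup perm.
Set Implicit Arguments. Unset Strict Implicit. Unset Printing Implicit Defensive.

Definition vtx (n : nat) := {ffun 'I_n -> bool}.

Definition flip n (x : vtx n) (i : 'I_n) : vtx n :=
  [ffun j => if j == i then ~~ x j else x j].

Definition is_Qedge n (e : {set vtx n}) : Prop :=
  exists (i : 'I_n) (x : vtx n), e = [set x; flip x i].

Definition subgraphQ n (G : {set {set vtx n}}) : Prop :=
  forall e, e \in G -> is_Qedge e.

Definition deg n (G : {set {set vtx n}}) (v : vtx n) : nat :=
  #|[set e in G | v \in e]|.

(* Vertices still present after the coordinates in S were fixed to the
   values x j (j in S). *)
Definition cur n (S : {set 'I_n}) (x : vtx n) : {set vtx n} :=
  [set y : vtx n | [forall j in S, y j == x j]].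

Definition upd n (x : vtx n) (i : 'I_n) (b : bool) : vtx n :=
  [ffun j => if j == i then b else x j].

(* chooser_wins k S x : with k rounds remaining, coordinates S already picked
   and the Chooser having kept the vertices agreeing with x on S, the Chooser
   can force a win. A round: for every unpicked coordinate i chosen by the
   Divider, the Chooser keeps the vertices with x_i = b for some b (i.e.
   deletes those with x_i = ~~ b). *)
Fixpoint chooser_wins n (G : {set {set vtx n}}) (k : nat)
    (S : {set 'I_n}) (x : vtx n) : bool :=
  match k with
  | 0 => cur S x \in G
  | k'.+1 => [forall i : 'I_n, (i \notin S) ==>
               [exists b : bool, chooser_wins G k' (i |: S) (upd x i b)]]
  end.

Definition chooser_has_winning_strategy n (G : {set {set vtx n}}) : bool :=
  chooser_wins G n.-1 set0 [ffun => false].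

Definition kn_subgraph (k n : nat) (G : {set {set vtx n}}) : Prop :=
  [/\ subgraphQ G,
      (forall v, deg G v <= k) &
      chooser_has_winning_strategy G].

Definition autQ n (s : 'S_n) (c : vtx n) (x : vtx n) : vtx n :=
  [ffun j => x (s j) (+) c j].

Definition aut_edges n (s : 'S_n) (c : vtx n) (E : {set {set vtx n}})
  : {set {set vtx n}} := [set [set autQ s c y | y in (e : {set vtx n})] | e in (E : {set {set vtx n}})].

(* Strings in {0,1,*}^n : Some false = 0, Some true = 1, None = * . *)
Definition Z0 : option bool := Some false.
Definition O1 : option bool := Some true.
Definition St : option bool := None.

(* The set of vertices matching a string (for exactly one * : an edge). *)
Definition estr n (s : seq (option bool)) : {set vtx n} :=
  [set x : vtx n | [forall j : 'I_n,
     match nth St s j with Some b => x j == b | None => true end]].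
Arguments estr : clear implicits.
Arguments kn_subgraph : clear implicits.

(* Main.v *)
Require Import Defs.
From mathcomp Require Import all_boot fingroup perm.
Set Implicit Arguments. Unset Strict Implicit. Unset Printing Implicit Defensive.


Section Gen.
Variable T : eqType.
Inductive form := FV of T | FT | FF | FA of form & form | FO of form & form.

Fixpoint ev (g : T -> bool) (f : form) : bool :=
  match f with
  | FV k => g k | FT => true | FF => false
  | FA a b => ev g a && ev g b | FO a b => ev g a || ev g b end.

Fixpoint srch (fuel : nat) (degs pats : seq (seq T)) (Tl : seq T) (obs : seq form) : bool :=
  match fuel with 0 => false | f'.+1 =>
  match obs with [::] => has (all (mem Tl)) pats
  | o :: rest => match o with
    | FV k => if k \in Tl then srch f' degs pats Tl rest else
        if has (fun I => (k \in I) && (2 < count (mem (k :: Tl)) I)) degs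
        then true else srch f' degs pats (k :: Tl) rest
    | FT => srch f' degs pats Tl rest
    | FF => true
    | FA a b => srch f' degs pats Tl (a :: b :: rest)
    | FO a b => if ev (mem Tl) a || ev (mem Tl) b then srch f' degs pats Tl rest
                else if srch f' degs pats Tl (a :: rest) then srch f' degs pats Tl (b :: rest) else false
    end end end.

Lemma srch_sound fuel degs pats Tl obs : srch fuel degs pats Tl obs ->
  forall g : T -> bool, all g Tl -> all (ev g) obs ->
  has (fun I => 2 < count g I) degs || has (all g) pats.
Proof.
elim: fuel Tl obs => [|f IH] Tl [|o rest] //=.
  move=> Hs g HT _; apply/orP; right; case/hasP: Hs => p Hp Hp2; apply/hasP; exists p => //.
  by apply/allP => y /(allP Hp2) /(allP HT).
move=> Hs g HT /andP[Ho Hr].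
case: o Hs Ho => [k||| a b | a b] /= Hs Ho.
- case: ifP Hs => Hk Hs; first by apply: (IH _ _ Hs); rewrite // Hr.
  have sub : subpred (mem (k :: Tl)) g.
    by move=> y; rewrite inE => /orP[/eqP -> //|]; move/allP: HT; apply.
  case: ifP Hs => Hd Hs.
  + case/hasP: Hd => I HI /andP[_ HI2]; apply/orP; left; apply/hasP; exists I => //.
    exact: leq_trans HI2 (sub_count sub I).
  + by apply: (IH _ _ Hs); rewrite //= Ho.
- by apply: (IH _ _ Hs); rewrite // Hr.
- by [].
- by apply: (IH _ _ Hs); rewrite //=; case/andP: Ho => -> ->.
- case: ifP Hs => _ Hs; first by apply: (IH _ _ Hs); rewrite // Hr.
  case: ifP Hs => // Ha Hb; case/orP: Ho => Ho.
  + by apply: (IH _ _ Ha); rewrite //= Ho.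
  + by apply: (IH _ _ Hb); rewrite //= Ho.
Qed.
End Gen.

Notation str := (seq (option bool)).
Fixpoint allV (n : nat) : seq (seq bool) :=
  match n with 0 => [:: [::]] | n'.+1 => [seq b :: v | b <- [:: false; true], v <- allV n'] end.
Fixpoint allS (n : nat) : seq str :=
  match n with 0 => [:: [::]] | n'.+1 => [seq b :: v | b <- [:: St; Z0; O1], v <- allS n'] end.
Definition allE n : seq str := [seq s <- allS n | count (fun o => o == St) s == 1].
Definition cmatch n (v : seq bool) (p : str) : bool :=
  all (fun j => match nth St p j with Some b => nth false v j == b | None => true end) (iota 0 n).
Definition mkstr n (Sc xc : seq bool) : str :=
  [seq if nth false Sc j then Some (nth false xc j) else St | j <- iota 0 n].
Fixpoint cgame n (k : nat) (Sc xc : seq bool) : form str :=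
  match k with
  | 0 => FV (mkstr n Sc xc)
  | k'.+1 => foldr (@FA _) (FT _) [seq if nth false Sc j then FT _ else
       FO (cgame n k' (set_nth false Sc j true) (set_nth false xc j false))
          (cgame n k' (set_nth false Sc j true) (set_nth false xc j true)) | j <- iota 0 n]
  end.
Definition cdegs n : seq (seq str) := [seq [seq s <- allE n | cmatch n v s] | v <- allV n].
Definition ctr n (pi : seq nat) (cc : seq bool) (p : str) : str :=
  [seq omap (addb (nth false cc j)) (nth St p (nth 0 pi j)) | j <- iota 0 n].
Definition rawpats n (P : seq str) : seq (seq str) :=
  [seq [seq ctr n pi cc p | p <- P] | pi <- permutations (iota 0 n), cc <- allV n].
Definition cpats n P := undup [seq [seq s <- allE n | s \in pat] | pat <- rawpats n P].
Definition runchk n P :=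
  srch 1000 (cdegs n) (cpats n P) [::] [:: cgame n n.-1 (nseq n false) (nseq n false)].

Definition P4 : seq str := [:: [:: St; Z0; Z0; Z0]; [:: Z0; St; Z0; Z0];
                          [:: Z0; O1; St; Z0]; [:: Z0; O1; O1; St];
                          [:: Z0; St; O1; O1]; [:: St; Z0; O1; O1];
                          [:: O1; Z0; O1; St]; [:: O1; Z0; St; Z0]].
Definition P3 : seq str := [:: [:: O1; Z0; St]; [:: St; Z0; Z0];
                          [:: Z0; St; Z0]; [:: Z0; O1; St]].

Definition mathv n (v : seq bool) : vtx n := [ffun j : 'I_n => nth false v j].


Lemma ev_foldrA (T : eqType) (g : T -> bool) l : ev g (foldr (@FA T) (FT T) (l : seq (form T))) = all (ev g) l.
Proof. by elim: l => //= a l ->. Qed.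

Lemma cur_mk n Sc xc :
  cur [set j : 'I_n | nth false Sc j] (mathv n xc) = estr n (mkstr n Sc xc).
Proof.
apply/setP => y; rewrite !inE; apply: eq_forallb => j.
rewrite inE (nth_map 0) ?size_iota // nth_iota // add0n ffunE.
by case: (nth false Sc j).
Qed.

Lemma game_ok n G k Sc xc :
  chooser_wins G k [set j : 'I_n | nth false Sc j] (mathv n xc) ->
  ev (fun s => estr n s \in G) (cgame n k Sc xc).
Proof.
elim: k Sc xc => [|k IH] Sc xc /=; first by rewrite cur_mk.
move/forallP => H; rewrite ev_foldrA all_map; apply/allP => j.
rewrite mem_iota => /andP[_ jn] /=; case: ifP => HS //=.
have := H (Ordinal jn); rewrite inE /= HS /= => /existsP [b Hb].
have E1 : Ordinal jn |: [set j0 : 'I_n | nth false Sc j0] =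
          [set j0 : 'I_n | nth false (set_nth false Sc j true) j0].
  apply/setP => j'; rewrite !inE nth_set_nth /=.
  by case: (j' =P Ordinal jn) => [->|Hne]; rewrite ?eqxx //; case: eqP => // He;
     case: Hne; apply: val_inj.
have E2 : upd (mathv n xc) (Ordinal jn) b = mathv n (set_nth false xc j b).
  apply/ffunP => j'; rewrite !ffunE nth_set_nth /=.
  by case: (j' =P Ordinal jn) => [->|Hne]; rewrite ?eqxx //; case: eqP => // He;
     case: Hne; apply: val_inj.
rewrite E1 E2 in Hb; case: b {E2} Hb => Hb; apply/orP; [right|left]; exact: IH.
Qed.

Lemma mem_estr n v p : (mathv n v \in estr n p) = cmatch n v p.
Proof.
rewrite inE /cmatch; apply/forallP/allP.
- move=> H j; rewrite mem_iota => /andP[_ jn]; have := H (Ordinal jn); by rewrite ffunE.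
- move=> H j; have := H j; rewrite mem_iota /= ltn_ord ffunE; exact.
Qed.

Definition sepchk n := all (fun s1 => all (fun s2 => (s1 == s2) ||
   has (fun w => cmatch n w s1 != cmatch n w s2) (allV n)) (allE n)) (allE n).

Lemma estr_inj n : sepchk n -> {in allE n &, injective (estr n)}.
Proof.
move=> /allP H s1 s2 H1 H2 E; have /allP := H _ H1; move=> /(_ _ H2) /orP[/eqP //|].
by case/hasP => w _; rewrite -!mem_estr E eqxx.
Qed.

Lemma degs_ok n G I : uniq (allE n) -> sepchk n -> I \in cdegs n ->
  (forall v, deg G v <= 2) -> count (fun s => estr n s \in G) I <= 2.
Proof.
move=> U S /mapP [v _ ->] Hd.
rewrite -size_filter; set J := filter _ _.
have JE : {subset J <= allE n} by move=> s; rewrite !mem_filter => /andP[_ /andP[_ ->]].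
have UJ : uniq (map (estr n) J).
  rewrite map_inj_in_uniq; first by do 2 apply: filter_uniq.
  by move=> x y Hx Hy; apply: (estr_inj S); apply: JE.
apply: leq_trans (Hd (mathv n v)); rewrite /deg cardE -(size_map (estr n)).
apply: uniq_leq_size => // e /mapP [s Hs ->]; rewrite mem_enum inE.
by move: Hs; rewrite !mem_filter mem_estr => /andP[-> /andP[-> _]].
Qed.

Definition tr n (s : 'S_n) (c : vtx n) (p : str) : str :=
  [seq omap (addb (c j)) (nth St p (s j)) | j <- enum 'I_n].

Lemma img_estr n (s : 'S_n) (c : vtx n) p :
  [set autQ s c y | y in (estr n p : {set vtx n})] = estr n (tr s c p).
Proof.
apply/setP => z; apply/imsetP/idP.
- case=> y Hy ->; rewrite inE; apply/forallP => j.
  rewrite (nth_map j) ?size_enum_ord // nth_ord_enum ffunE.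
  move: Hy; rewrite inE => /forallP /(_ (s j)).
  by case: (nth St p (s j)) => [b|] //= /eqP ->; rewrite addbC.
- rewrite inE => /forallP Hz.
  exists [ffun i => z ((s^-1)%g i) (+) c ((s^-1)%g i)].
  + rewrite inE; apply/forallP => i; rewrite ffunE.
    have := Hz ((s^-1)%g i); rewrite (nth_map i) ?size_enum_ord // nth_ord_enum permKV.
    by case: (nth St p i) => [b|] //= /eqP ->; rewrite addbC addKb.
  + by apply/ffunP => j; rewrite !ffunE permK addbK.
Qed.

Lemma mkperm n pi : pi \in permutations (iota 0 n) ->
  exists s : 'S_n, forall j : 'I_n, val (s j) = nth 0 pi j.
Proof.
rewrite mem_permutations => Hp.
have Hs : size pi = n by rewrite (perm_size Hp) size_iota.
have Hu : uniq pi by rewrite (perm_uniq Hp) iota_uniq.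
have Hlt : forall j : 'I_n, nth 0 pi j < n.
  move=> j; have : nth 0 pi j \in pi by rewrite mem_nth // Hs.
  by rewrite (perm_mem Hp) mem_iota.
pose f := fun j : 'I_n => insubd j (nth 0 pi j) : 'I_n.
have fE : forall j, val (f j) = nth 0 pi j by move=> j; rewrite val_insubd Hlt.
have fI : injective f.
  move=> j1 j2 /(congr1 val); rewrite !fE => /eqP; rewrite nth_uniq ?Hs //.
  by move/eqP/val_inj.
by exists (perm fI) => j; rewrite permE fE.
Qed.

Definition patschk n P := all (fun pat => all (mem (allE n)) pat) (rawpats n P).

Lemma pat_ok n P (G : {set {set vtx n}}) p' : p' \in cpats n P -> patschk n P ->
  all (fun s => estr n s \in G) p' -> exists (s : 'S_n) (c : vtx n),
  forall p, p \in P -> [set autQ s c y | y in (estr n p : {set vtx n})] \in G.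
Proof.
rewrite mem_undup => /mapP [pat Hpat ->] /allP Hchk Hall.
have Hg : forall q, q \in pat -> estr n q \in G.
  move=> q Hq; apply: (allP Hall); rewrite mem_filter Hq /=.
  exact: (allP (Hchk _ Hpat)).
case/allpairsP: Hpat => [[pi cc] [/= Hpi _ Epat]].
have [s Hs] := mkperm Hpi.
exists s, (mathv n cc) => p Hp.
rewrite img_estr.
have -> : tr s (mathv n cc) p = ctr n pi cc p.
  rewrite /ctr /tr -val_enum_ord -map_comp; apply: eq_map => j /=.
  by rewrite ffunE Hs.
by apply: Hg; rewrite Epat; apply: map_f.
Qed.

Lemma mainQ n (P : seq str) (E : {set {set vtx n}}) (G : {set {set vtx n}}) :
  {subset E <= map (estr n) P} -> uniq (allE n) -> sepchk n -> patschk n P ->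
  srch 1000 (cdegs n) (cpats n P) [::] [:: cgame n n.-1 (nseq n false) (nseq n false)] ->
  kn_subgraph 2 n G -> exists s c, aut_edges s c E \subset G.
Proof.
move=> HE U S Pc Hr [_ Hd Hw].
have Hg : ev (fun s => estr n s \in G) (cgame n n.-1 (nseq n false) (nseq n false)).
  apply: game_ok.
  have -> : [set j : 'I_n | nth false (nseq n false) j] = set0.
    by apply/setP => j; rewrite !inE nth_nseq if_same.
  have -> : mathv n (nseq n false) = [ffun => false].
    by apply/ffunP => j; rewrite !ffunE nth_nseq if_same.
  exact: Hw.
have := @srch_sound _ 1000 (cdegs n) (cpats n P) [::] [:: cgame n n.-1 (nseq n false) (nseq n false)] Hr (fun s => estr n s \in G) isT.
rewrite /= Hg => /(_ isT).
case/orP => /hasP [I HI HI2].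
  by have := degs_ok U S HI Hd; rewrite leqNgt HI2.
have [s [c Hsc]] := pat_ok HI Pc HI2.
exists s, c; apply/subsetP => e' /imsetP [e He ->].
by case/mapP: (HE _ He) => p Hp ->; apply: Hsc.
Qed.

Definition P2 : seq str := [:: [:: St; Z0]; [:: Z0; St]].

Lemma part1 (G : {set {set vtx 1}}) : kn_subgraph 1 1 G -> G = [set estr 1 [:: St]].
Proof.
case=> HQ _ Hw.
have cur0 : forall x : vtx 1, cur set0 x = setT.
  by move=> x; apply/setP => y; rewrite !inE; apply/forall_inP => j; rewrite inE.
have estrT : estr 1 [:: St] = setT.
  apply/setP => y; rewrite !inE; apply/forallP => j.
  by case: j => [[|k] Hk].
rewrite estrT; apply/setP => e; rewrite inE; apply/idP/eqP.
- move/HQ => [i [x ->]]; apply/setP => y; rewrite !inE.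
  case: (y i =P x i) => H.
  + apply/orP; left; apply/eqP/ffunP => j; by rewrite (ord1 j) -(ord1 i).
  + apply/orP; right; apply/eqP/ffunP => j; rewrite ffunE (ord1 j) -(ord1 i) eqxx.
    by case: (y i) (x i) H => [] [].
- by move=> ->; move: Hw; rewrite /chooser_has_winning_strategy /= cur0.
Qed.

Theorem lemma6 :
  (forall G : {set {set vtx 1}}, kn_subgraph 1 1 G ->
     G = [set estr 1 [:: St]]) /\
  (forall G : {set {set vtx 2}}, kn_subgraph 2 2 G ->
     exists (s : 'S_2) (c : vtx 2),
       aut_edges s c [set estr 2 [:: St; Z0]; estr 2 [:: Z0; St]] \subset G) /\
  (forall G : {set {set vtx 3}}, kn_subgraph 2 3 G ->
     exists (s : 'S_3) (c : vtx 3),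
       aut_edges s c [set estr 3 [:: O1; Z0; St]; estr 3 [:: St; Z0; Z0];
                          estr 3 [:: Z0; St; Z0]; estr 3 [:: Z0; O1; St]]
       \subset G) /\
  (forall G : {set {set vtx 4}}, kn_subgraph 2 4 G ->
     exists (s : 'S_4) (c : vtx 4),
       aut_edges s c [set estr 4 [:: St; Z0; Z0; Z0]; estr 4 [:: Z0; St; Z0; Z0];
                          estr 4 [:: Z0; O1; St; Z0]; estr 4 [:: Z0; O1; O1; St];
                          estr 4 [:: Z0; St; O1; O1]; estr 4 [:: St; Z0; O1; O1];
                          estr 4 [:: O1; Z0; O1; St]; estr 4 [:: O1; Z0; St; Z0]]
       \subset G).
Proof.
split; first exact: part1.
split.
  move=> G HG; apply: (@mainQ 2 P2) HG.
  - by move=> e; rewrite !inE -?orbA.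
  - by vm_compute.
  - by vm_compute.
  - by vm_compute.
  - by vm_compute.
split.
  move=> G HG; apply: (@mainQ 3 P3) HG.
  - by move=> e; rewrite !inE -?orbA.
  - by vm_compute.
  - by vm_compute.
  - by vm_compute.
  - by vm_compute.
move=> G HG; apply: (@mainQ 4 P4) HG.
- by move=> e; rewrite !inE -?orbA.
- by vm_compute.
- by vm_compute.
- by vm_compute.
- vm_cast_no_check (erefl true).
Qed.
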